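(* Let $V$ be a simple Yetter-Drinfeld module over $H=B(n,w,\gamma)$ with $\dim_\Bbbk V=p+1$ for some $p\ge0$, and let $v\in V$ be a standard element of type $(\alpha,\beta,h)$ with $\alpha,\beta\in\Bbbk^*$, $h\in G(H)$. Then: (1) $p+1\le n$; (2) if $p+1<n$, then $y^{p+1}\cdot v=0$; (3) $y^{p+1}\cdot v=0$ if and only if $\alpha^w=\beta^n=1$; (4) $y^{p+1}\cdot v\ne0$ if and only if $\alpha^w=\beta^n\ne1$.
   Context: $\Bbbk$ is an algebraically closed field of characteristic $0$; $n,w$ positive integers, $\gamma$ a primitive $n$-th root of unity. $H=B(n,w,\gamma)$ is the Hopf algebra generated by $x^{\pm1},g,y$ with relations $xx^{-1}=x^{-1}x=1$, $xg=gx$, $xy=yx$, $yg=\gamma gy$, $y^n=1-x^w=1-g^n$, with $\Delta(x)=x\otimes x$, $\Delta(g)=g\otimes g$, $\Delta(y)=y\otimes g+1\otimes y$, $\varepsilon(x)=\varepsilon(g)=1$, $\varepsilon(y)=0$, $S(x)=x^{-1}$, $S(g)=g^{-1}$, $S(y)=-yg^{-1}$; $G(H)=\{g^jx^k\}$. A (left-left) Yetter-Drinfeld module is a left $H$-module, left $H$-comodule $(V,\cdot,\delta)$ with $\delta(h\cdot v)=h_{(1)}v_{(-1)}S(h_{(3)})\otimes h_{(2)}\cdot v_{(0)}$; simple means no nonzero proper Yetter-Drinfeld submodules. A nonzero $v\in V$ is a standard element of type $(\alpha,\beta,h)$ if $h\in G(H)$, $\alpha,\beta\in\Bbbk^*$,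 $x\cdot v=\alpha v$, $g\cdot v=\beta v$, $\delta(v)=h\otimes v$. *)

(* Defs.v *)
From HB Require Import structures.
From mathcomp Require Import all_boot all_order all_algebra.
Set Implicit Arguments. Unset Strict Implicit. Unset Printing Implicit Defensive.
Import Order.TTheory GRing.Theory Num.Theory.
Local Open Scope ring_scope.

(* The Hopf algebra H = B(n,w,gamma), encoded through its PBW-type basis    *)
(*   x^k g^j y^i   (k : int, 0 <= j < n, 0 <= i < n).                       *)
(* An index triple (k, j, i) : idx (with arbitrary j i : nat) stands for the *)
(* element x^k g^j y^i of H; elements of H are finite formal combinations   *)
(* seq (K * idx); all products are computed with the exact multiplication  *)
(* rule of H and always return reduced indices (j < n, i < n).             *)

Definition idx := (int * nat * nat)%type.

Section BHopf.
Variables (K : fieldType) (n w : nat) (gam : K).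

Definition Hel := seq (K * idx).

(* x^k g^j y^i * x^k' g^j' y^i' = gam^(i j') x^(k+k') g^(j+j') y^(i+i'),
   then g^(n q + r) = x^(w q) g^r and y^(n m + s) = (1 - x^w)^m y^s.      *)
Definition mulB (a b : idx) : Hel :=
  let: (k, j, i) := a in let: (k', j', i') := b in
  let J := (j + j')%N in let I := (i + i')%N in let m := (I %/ n)%N in
  [seq (gam ^+ (i * j') * ('C(m, t))%:R * (-1) ^+ t,
        (k + k' + ((w * (J %/ n))%N)%:Z + ((w * t)%N)%:Z, (J %% n)%N, (I %% n)%N))
  | t <- iota 0 m.+1].

Definition nf (b : idx) : Hel := mulB b (0, 0%N, 0%N).

Definition mulH (h h' : Hel) : Hel :=
  flatten [seq [seq (p.1 * q.1 * r.1, r.2) | r <- mulB p.2 q.2] | p <- h, q <- h'].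

Definition oneH : Hel := [:: (1, (0, 0%N, 0%N))].
Definition powH (h : Hel) (m : nat) : Hel := iter m (mulH h) oneH.

(* elements of H (x) H *)
Definition HHel := seq (K * (idx * idx)).
Definition mulHH (t t' : HHel) : HHel :=
  flatten [seq [seq (p.1 * q.1 * r1.1 * r2.1, (r1.2, r2.2))
               | r1 <- mulB p.2.1 q.2.1, r2 <- mulB p.2.2 q.2.2] | p <- t, q <- t'].
Definition oneHH : HHel := [:: (1, ((0, 0%N, 0%N), (0, 0%N, 0%N)))].
Definition powHH (t : HHel) (m : nat) : HHel := iter m (mulHH t) oneHH.

(* coproduct: Delta(x) = x(x)x, Delta(g) = g(x)g, Delta(y) = y(x)g + 1(x)y,
   extended multiplicatively: Delta(x^k g^j y^i) = Delta(x)^k Delta(g)^j Delta(y)^i *)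
Definition DeltaB (b : idx) : HHel :=
  let: (k, j, i) := b in
  mulHH [:: (1, ((k, 0%N, 0%N), (k, 0%N, 0%N)))]
    (mulHH (powHH [:: (1, ((0, 1%N, 0%N), (0, 1%N, 0%N)))] j)
           (powHH [:: (1, ((0, 0%N, 1%N), (0, 1%N, 0%N)));
                      (1, ((0, 0%N, 0%N), (0, 0%N, 1%N)))] i)).

(* (Delta (x) id) Delta on a basis element: terms h1 (x) h2 (x) h3 *)
Definition Delta2B (b : idx) : seq (K * (idx * idx * idx)) :=
  flatten [seq [seq (p.1 * r.1, (r.2.1, r.2.2, p.2.2)) | r <- DeltaB p.2.1]
          | p <- DeltaB b].

Definition Delta2H (h : Hel) : seq (K * (idx * idx * idx)) :=
  flatten [seq [seq (p.1 * r.1, r.2) | r <- Delta2B p.2] | p <- h].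

(* counit: eps(x) = eps(g) = 1, eps(y) = 0 *)
Definition epsB (b : idx) : K := (b.2 == 0%N)%:R.

(* antipode: S(x) = x^-1, S(g) = g^-1 = g^(n-1) x^(-w), S(y) = - y g^-1,
   extended anti-multiplicatively: S(x^k g^j y^i) = S(y)^i S(g)^j S(x)^k *)
Definition ginvH : Hel := [:: (1, (- (w%:Z), (n.-1)%N, 0%N))].
Definition SyH : Hel := mulH [:: (-1, (0, 0%N, 1%N))] ginvH.
Definition SB (b : idx) : Hel :=
  let: (k, j, i) := b in
  mulH (powH SyH i) (mulH (powH ginvH j) [:: (1, (- k, 0%N, 0%N))]).

(* The H-module structure is given by the actions X, Xi (= x^-1), G, Y of   *)
(* the generators, subject to the defining relations of H.  The comodule    *)
(* structure is a map delta : V -> H (x) V, an element of H (x) V being a   *)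
(* finite formal sum  seq (idx * V)  of  b (x) v.                          *)

Variable V : vectType K.

Definition Xpow (X Xi : V -> V) (k : int) : V -> V :=
  match k with Posz m => iter m X | Negz m => iter m.+1 Xi end.

Definition rhoB (X Xi G Y : V -> V) (b : idx) (v : V) : V :=
  let: (k, j, i) := b in Xpow X Xi k (iter j G (iter i Y v)).

Definition rhoH (X Xi G Y : V -> V) (h : Hel) (v : V) : V :=
  \sum_(p <- h) p.1 *: rhoB X Xi G Y p.2 v.

Definition is_Hmodule (X Xi G Y : {linear V -> V}) : Prop :=
  (forall v, X (Xi v) = v) /\ (forall v, Xi (X v) = v) /\
  (forall v, X (G v) = G (X v)) /\ (forall v, X (Y v) = Y (X v)) /\
  (forall v, Y (G v) = gam *: G (Y v)) /\
  (forall v, iter n Y v = v - iter w X v) /\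
  (forall v, iter w X v = iter n G v).

(* coefficient (in V) of the basis element b in a formal tensor of H (x) V *)
Definition tc (t : seq (idx * V)) (b : idx) : V :=
  \sum_(q <- t) \sum_(r <- nf q.1 | r.2 == b) r.1 *: q.2.

(* coefficient of b1 (x) b2 in a formal tensor of H (x) H (x) V *)
Definition tc2 (t : seq ((idx * idx) * V)) (b1 b2 : idx) : V :=
  \sum_(q <- t) \sum_(r1 <- nf q.1.1) \sum_(r2 <- nf q.1.2 | (r1.2 == b1) && (r2.2 == b2))
     (r1.1 * r2.1) *: q.2.

Definition DeltaId (t : seq (idx * V)) : seq ((idx * idx) * V) :=
  flatten [seq [seq (r.2, r.1 *: q.2) | r <- DeltaB q.1] | q <- t].

Definition IdDelta (delta : V -> seq (idx * V)) (t : seq (idx * V))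
  : seq ((idx * idx) * V) :=
  flatten [seq [seq ((q.1, s.1), s.2) | s <- delta q.2] | q <- t].

Definition is_Hcomodule (delta : V -> seq (idx * V)) : Prop :=
  [/\ (forall (a : K) (u v : V) b,
         tc (delta (a *: u + v)) b = a *: tc (delta u) b + tc (delta v) b),
      (forall v b1 b2, tc2 (DeltaId (delta v)) b1 b2 = tc2 (IdDelta delta (delta v)) b1 b2)
    & (forall v, \sum_(q <- delta v) epsB q.1 *: q.2 = v)].

(* h_(1) v_(-1) S(h_(3)) (x) h_(2) . v_(0) *)
Definition YD_rhs (X Xi G Y : V -> V) (delta : V -> seq (idx * V)) (h : Hel) (v : V)
  : seq (idx * V) :=
  flatten [seq [seq (r.2, (q.1 * r.1) *: rhoB X Xi G Y q.2.1.2 s.2)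
               | r <- mulH (mulH [:: (1, q.2.1.1)] [:: (1, s.1)]) (SB q.2.2)]
          | q <- Delta2H h, s <- delta v].

Definition is_YD (X Xi G Y : {linear V -> V}) (delta : V -> seq (idx * V)) : Prop :=
  [/\ is_Hmodule X Xi G Y, is_Hcomodule delta
    & forall (h : Hel) (v : V) (b : idx),
        tc (delta (rhoH X Xi G Y h v)) b = tc (YD_rhs X Xi G Y delta h v) b].

Definition YD_simple (X Xi G Y : {linear V -> V}) (delta : V -> seq (idx * V)) : Prop :=
  forall U : {vspace V},
    (forall b u, u \in U -> rhoB X Xi G Y b u \in U) ->
    (forall u b, u \in U -> tc (delta u) b \in U) ->
    U = 0%VS \/ U = fullv.

(* standard element of type (alpha, beta, h) with h = g^j x^k in G(H) *)
Definition standard (X Xi G Y : {linear V -> V}) (delta : V -> seq (idx * V))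
  (v : V) (alpha beta : K) (k : int) (j : nat) : Prop :=
  [/\ v != 0 /\ alpha != 0 /\ beta != 0 /\ (j < n)%N,
      X v = alpha *: v, G v = beta *: v
    & forall b, tc (delta v) b = if b == (k, j, 0%N) then v else 0].

End BHopf.

(* Main.v *)
Require Import Defs.
From HB Require Import structures.
From mathcomp Require Import all_boot all_order all_algebra.
From mathcomp Require Import zify ring.
Import GRing.Theory.
Local Open Scope ring_scope.

Set Implicit Arguments. Unset Strict Implicit. Unset Printing Implicit Defensive.

Section Comb.
Variable K : fieldType.

Definition Pb (m : nat) (psi : nat -> K) := \sum_(s < m.+1) 'C(m, s)%:R * psi s.

Lemma Pb_S m psi : Pb m.+1 psi = Pb m psi + Pb m (fun s => psi s.+1).
Proof.
rewrite /Pb big_ord_recl.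
under eq_bigr do rewrite lift0 binS natrD mulrDl.
rewrite big_split /= addrA; congr (_ + _).
rewrite big_ord_recr /= (bin_small (ltnSn m)) mul0r addr0 [RHS]big_ord_recl !bin0.
by congr (_ + _); apply: eq_bigr => i _; rewrite lift0.
Qed.

Lemma vdm m1 m2 psi :
  \sum_(t < m1.+1) 'C(m1, t)%:R * Pb m2 (fun u => psi (t + u)%N) = Pb (m1 + m2) psi.
Proof.
elim: m1 psi => [|m1 IH] psi.
  rewrite big_ord_recl big_ord0 addr0 bin0 mul1r /=.
  by [].
change (Pb m1.+1 (fun t => Pb m2 (fun u => psi (t + u)%N)) = Pb (m1.+1 + m2) psi).
rewrite Pb_S addSn Pb_S -IH -(IH (fun s => psi s.+1)).
by [].
Qed.

End Comb.

Section Comb2.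
Variables (K : fieldType) (n w : nat) (gam : K).
Hypothesis n_gt0 : (0 < n)%N.
Hypothesis gamn : gam ^+ n = 1.

Definition E (F : idx -> K) (L : Hel K) := \sum_(r <- L) r.1 * F r.2.

Lemma sum_iota0 (f : nat -> K) m : \sum_(t <- iota 0 m) f t = \sum_(t < m) f t.
Proof. by rewrite -(big_mkord xpredT) /index_iota subn0. Qed.

Lemma E_mulB_nf F a c :
  E F (mulB n w gam a c) = \sum_(t <- nf n w gam c) t.1 * E F (mulB n w gam a t.2).
Proof.
case: a => [[k j] i]; case: c => [[k' j'] i'].
have hJ : ((j + j') %/ n = j' %/ n + (j + j' %% n) %/ n)%N.
  by rewrite {1}(divn_eq j' n) addnCA divnMDl.
have hI : ((i + i') %/ n = i' %/ n + (i + i' %% n) %/ n)%N.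
  by rewrite {1}(divn_eq i' n) addnCA divnMDl.
have hJm : ((j + j' %% n) %% n = (j + j') %% n)%N by rewrite modnDmr.
have hIm : ((i + i' %% n) %% n = (i + i') %% n)%N by rewrite modnDmr.
have hg : gam ^+ (i * (j' %% n)) = gam ^+ (i * j').
  by rewrite mulnC exprM (expr_mod _ gamn) -exprM mulnC.
pose psi s := (-1) ^+ s * F (k + k' + (w * ((j + j') %/ n))%N + (w * s)%N,
                             ((j + j') %% n)%N, ((i + i') %% n)%N).
rewrite /nf /E /mulB; cbv beta iota zeta.
rewrite !big_map !addn0 !muln0 expr0.
transitivity (gam ^+ (i * j') * Pb ((i + i') %/ n) psi).
  rewrite sum_iota0 /Pb mulr_sumr; apply: eq_bigr => t _.
  rewrite /psi /=; ring.
rewrite hI -vdm mulr_sumr sum_iota0; apply: eq_bigr => t _.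
cbn [fst snd]; rewrite big_map sum_iota0 /Pb !mulr_sumr; apply: eq_bigr => u _; cbn [fst snd].
have -> : (k + (k' + 0 + (w * (j' %/ n))%N + (w * t)%N) + (w * ((j + j' %% n) %/ n))%N + (w * u)%N,
   ((j + j' %% n) %% n)%N, ((i + i' %% n) %% n)%N) =
   (k + k' + (w * ((j + j') %/ n))%N + (w * (t + u))%N, ((j + j') %% n)%N, ((i + i') %% n)%N).
  rewrite hJ hJm hIm; congr (_, _, _).
  rewrite !mulnDr !PoszD; ring.
rewrite /psi hg exprD /=; ring.
Qed.

Lemma E_mulH F L T : E F (mulH n w gam L T) =
  \sum_(p <- L) p.1 * \sum_(q <- T) q.1 * E F (mulB n w gam p.2 q.2).
Proof.
rewrite /mulH /E big_flatten /= big_allpairs_dep.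
apply: eq_bigr => p _; rewrite mulr_sumr; apply: eq_bigr => q _.
rewrite big_map !mulr_sumr; apply: eq_bigr => r _ /=; ring.
Qed.

Lemma Phi_nf (chi : idx -> K) a T c :
  E chi (mulH n w gam (mulH n w gam [:: (1, a)] [:: (1, c)]) T) =
  \sum_(t <- nf n w gam c) t.1 * E chi (mulH n w gam (mulH n w gam [:: (1, a)] [:: (1, t.2)]) T).
Proof.
pose Fm d := \sum_(q <- T) q.1 * E chi (mulB n w gam d q.2).
have H1 c0 : E chi (mulH n w gam (mulH n w gam [:: (1, a)] [:: (1, c0)]) T) =
             E Fm (mulB n w gam a c0).
  rewrite E_mulH.
  have -> : \sum_(p <- mulH n w gam [:: (1, a)] [:: (1, c0)]) p.1 * Fm p.2 =
            E Fm (mulH n w gam [:: (1, a)] [:: (1, c0)]) by [].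
  by rewrite E_mulH !big_seq1 /= !mul1r.
rewrite H1 E_mulB_nf; apply: eq_bigr => t _; by rewrite H1.
Qed.
End Comb2.

Section Lin.
Variables (K : fieldType) (V : vectType K).

Definition islin (f : V -> V) := forall a u v, f (a *: u + v) = a *: f u + f v.

Lemma islin0 f : islin f -> f 0 = 0.
Proof.
move=> hf; have h := hf 1 0 0; rewrite !scale1r addr0 in h.
by apply: (@addrI _ (f 0)); rewrite addr0 -h.
Qed.

Lemma islinD f : islin f -> forall u v, f (u + v) = f u + f v.
Proof. by move=> hf u v; have := hf 1 u v; rewrite !scale1r. Qed.

Lemma islinZ f : islin f -> forall a u, f (a *: u) = a *: f u.
Proof. by move=> hf a u; rewrite -(addr0 (a *: u)) hf islin0 // addr0. Qed.

Lemma islin_sum f I (r : seq I) (P : pred I) (F : I -> V) : islin f ->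
  f (\sum_(i <- r | P i) F i) = \sum_(i <- r | P i) f (F i).
Proof. move=> hf; apply: (big_morph f (islinD hf) (islin0 hf)). Qed.

Lemma islin_lin (f : {linear V -> V}) : islin f.
Proof. by move=> a u v; rewrite linearP. Qed.

Lemma islin_iter f m : islin f -> islin (iter m f).
Proof.
move=> hf; elim: m => [|m IH] a u v //=.
by rewrite IH hf.
Qed.

Lemma islin_comp f g : islin f -> islin g -> islin (f \o g).
Proof. by move=> hf hg a u v /=; rewrite hg hf. Qed.

Lemma span_closed (f : V -> V) (S : seq V) (W : {vspace V}) : islin f ->
  (forall i, (i < size S)%N -> f S`_i \in W) -> forall u, u \in <<S>>%VS -> f u \in W.
Proof.
move=> hf hS u uS.
rewrite (coord_span (X := in_tuple S) uS) islin_sum //.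
apply: memv_suml => i _; rewrite islinZ //; apply: memvZ; exact: hS.
Qed.


Section Eig.
Variable f : {linear V -> V}.
Hypothesis hs : True.

Lemma eig_aux (s : seq (K * V)) :
  (forall x, x \in s -> f x.2 = x.1 *: x.2) ->
  forall u mu, u \in <<map snd s>>%VS -> f u = mu *: u -> mu \notin map fst s -> u = 0.
Proof.
elim: s => [|[lam e] s IH] hE u mu.
  by rewrite span_nil memv0 => /eqP.
rewrite /= span_cons => /memv_addP [u1 /vlineP [c ->] [u2 u2W ->]] hf.
rewrite in_cons negb_or => /andP [mulam muS].
have hE' : forall x, x \in s -> f x.2 = x.1 *: x.2.
  by move=> x xs; apply: hE; rewrite in_cons xs orbT.
have fe : f e = lam *: e by apply: (hE (lam, e)); rewrite in_cons eqxx.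
have stab : forall z, z \in <<map snd s>>%VS -> f z \in <<map snd s>>%VS.
  apply: span_closed; first exact: islin_lin.
  move=> i; rewrite size_map => isz.
  rewrite (nth_map (0, 0)) //.
  rewrite hE'; last exact: mem_nth.
  by apply: memvZ; apply: memv_span; apply: map_f; apply: mem_nth.
pose z := (mu - lam) *: (c *: e + u2).
have zW : z \in <<map snd s>>%VS.
  have -> : z = f u2 - lam *: u2.
    rewrite /z scalerBl -hf linearD (islinZ (islin_lin f)) fe.
    by rewrite scalerDr !scalerA [lam * c]mulrC opprD addrACA subrr add0r.
  by apply: memvB => //; [apply: stab | apply: memvZ].
have fz : f z = mu *: z by rewrite /z (islinZ (islin_lin f)) hf !scalerA mulrC.
have := IH hE' z mu zW fz muS.
move/eqP; rewrite scaler_eq0 subr_eq0 (negPf mulam) /=.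
by move/eqP.
Qed.

Lemma eig_free (s : seq (K * V)) : uniq (map fst s) ->
  (forall x, x \in s -> f x.2 = x.1 *: x.2 /\ x.2 != 0) -> free (map snd s).
Proof.
elim: s => [|[lam e] s IH]; first by rewrite nil_free.
rewrite /= => /andP [lamS us] hE.
have hE' : forall x, x \in s -> f x.2 = x.1 *: x.2 /\ x.2 != 0.
  by move=> x xs; apply: hE; rewrite in_cons xs orbT.
rewrite free_cons (IH us hE') andbT.
have [fe e0] : f e = lam *: e /\ e != 0 by apply: (hE (lam, e)); rewrite in_cons eqxx.
apply/negP => eS.
have := eig_aux (fun x xs => (hE' x xs).1) eS fe lamS.
by move/eqP; rewrite (negPf e0).
Qed.
End Eig.
End Lin.

Section YDkey.
Variables (K : fieldType) (n w : nat) (gam : K).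
Hypothesis n_gt0 : (0 < n)%N.
Hypothesis gamn : gam ^+ n = 1.
Variables (V : vectType K) (X Xi G Y : {linear V -> V}) (delta : V -> seq (idx * V)).

Definition chi (b d : idx) : K := \sum_(r <- nf n w gam d | r.2 == b) r.1.

Lemma tc_E (L : seq (idx * V)) b : tc n w gam L b = \sum_(e <- L) chi b e.1 *: e.2.
Proof. by rewrite /tc; apply: eq_bigr => e _; rewrite /chi scaler_suml. Qed.

Lemma islin_rhoB b : islin (rhoB X Xi G Y b).
Proof.
case: b => [[k j] i] a u v /=.
rewrite (islin_iter i (islin_lin Y)) (islin_iter j (islin_lin G)).
case: k => m /=; first by rewrite (islin_iter m (islin_lin X)).
by rewrite (islin_iter m (islin_lin Xi)) linearP.
Qed.

Definition Bl (D : seq (idx * V)) : seq idx :=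
  undup (flatten [seq [seq t.2 | t <- nf n w gam s.1] | s <- D]).

Lemma regroup (Phi : idx -> K) (D : seq (idx * V)) :
  \sum_(s <- D) \sum_(t <- nf n w gam s.1) (t.1 * Phi t.2) *: s.2 =
  \sum_(b' <- Bl D) Phi b' *: tc n w gam D b'.
Proof.
rewrite /tc.
under [RHS]eq_bigr do rewrite scaler_sumr.
rewrite exchange_big /=; apply: eq_big_seq => s sD.
under [RHS]eq_bigr do rewrite scaler_sumr big_mkcond.
rewrite exchange_big /=; apply: eq_big_seq => t tN.
have tB : t.2 \in Bl D.
  rewrite /Bl mem_undup; apply/flatten_mapP; exists s => //.
  by apply: map_f.
rewrite (bigD1_seq t.2) ?undup_uniq //= eqxx big1 ?addr0.
  by rewrite scalerA mulrC.
by move=> b' /negPf; rewrite eq_sym => ->.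
Qed.

Lemma key (U : {vspace V}) (HU : forall b u, u \in U -> rhoB X Xi G Y b u \in U) h u b :
  (forall b', tc n w gam (delta u) b' \in U) ->
  tc n w gam (YD_rhs n w gam X Xi G Y delta h u) b \in U.
Proof.
move=> hu.
rewrite tc_E /YD_rhs big_flatten /= big_allpairs_dep.
apply: memv_suml => q _.
set R := rhoB X Xi G Y q.2.1.2.
have hR : islin R by apply: islin_rhoB.
pose Phi c := E (chi b) (mulH n w gam (mulH n w gam [:: (1, q.2.1.1)] [:: (1, c)]) (SB n w gam q.2.2)).
have eq1 : \sum_(s <- delta u)
     \sum_(i <- [seq (r.2, (q.1 * r.1) *: R s.2)
                   | r <- mulH n w gam (mulH n w gam [:: (1, q.2.1.1)] [:: (1, s.1)])
                            (SB n w gam q.2.2)]) chi b i.1 *: i.2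
   = q.1 *: R (\sum_(s <- delta u) Phi s.1 *: s.2).
  rewrite islin_sum // scaler_sumr; apply: eq_bigr => s _.
  rewrite big_map islinZ // scalerA.
  under eq_bigr do rewrite /= scalerA.
  rewrite -scaler_suml /Phi /E mulr_sumr; congr (_ *: _).
  by apply: eq_bigr => r _; rewrite mulrC mulrA.
rewrite eq1; apply: memvZ; apply: HU.
have eq2 : \sum_(s <- delta u) Phi s.1 *: s.2 =
   \sum_(s <- delta u) \sum_(t <- nf n w gam s.1) (t.1 * Phi t.2) *: s.2.
  by apply: eq_bigr => s _; rewrite /Phi Phi_nf // scaler_suml.
rewrite eq2 regroup; apply: memv_suml => b' _; apply: memvZ; exact: hu.
Qed.
End YDkey.

Unset Implicit Arguments. Set Strict Implicit.

Theorem lemma3p6 (K : closedFieldType) (char0 : [pchar K] =i pred0)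
  (n w : nat) (n_gt0 : (0 < n)%N) (w_gt0 : (0 < w)%N)
  (gam : K) (gam_prim : n.-primitive_root gam)
  (V : vectType K) (p : nat) (dimV : \dim {: V} = p.+1)
  (X Xi G Y : {linear V -> V}) (delta : V -> seq (idx * V))
  (YD : is_YD n w gam X Xi G Y delta)
  (simple : YD_simple n w gam X Xi G Y delta)
  (v : V) (alpha beta : K) (k : int) (j : nat)
  (std : standard n w gam X Xi G Y delta v alpha beta k j) :
  [/\ (p.+1 <= n)%N,
      ((p.+1 < n)%N -> iter p.+1 Y v = 0),
      (iter p.+1 Y v = 0 <-> alpha ^+ w = 1 /\ beta ^+ n = 1)
    & (iter p.+1 Y v != 0 <-> alpha ^+ w = beta ^+ n /\ beta ^+ n != 1)].
Proof.
case: YD => [[hXXi [hXiX [hXG [hXY [hYG [hYn hXG']]]]]] [dlin _ _] hYD].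
case: std => [[v0 [a0 [b0 jn]]] hXv hGv hdv].
have gamn : gam ^+ n = 1 := prim_expr_order gam_prim.
have gam0 : gam != 0 by rewrite (prim_root_eq0 gam_prim) -lt0n.
pose Yl l := iter l Y v.
have iterZ (f : {linear V -> V}) m (c : K) u : iter m f (c *: u) = c *: iter m f u.
  exact: (islinZ (islin_iter m (islin_lin f))).
have linZ (f : {linear V -> V}) (c : K) u : f (c *: u) = c *: f u.
  exact: (islinZ (islin_lin f)).
have iter0 (f : {linear V -> V}) m : iter m f 0 = 0.
  exact: (islin0 (islin_iter m (islin_lin f))).
have iterX m : iter m X v = alpha ^+ m *: v.
  elim: m => [|m IH]; first by rewrite scale1r.
  by rewrite iterS IH linZ hXv scalerA exprSr.
have iterG m : iter m G v = beta ^+ m *: v.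
  elim: m => [|m IH]; first by rewrite scale1r.
  by rewrite iterS IH linZ hGv scalerA exprSr.
have awbn : alpha ^+ w = beta ^+ n.
  have := hXG' v; rewrite iterX iterG => /eqP.
  by rewrite -subr_eq0 -scalerBl scaler_eq0 (negPf v0) orbF subr_eq0 => /eqP.
have Yn : Yl n = (1 - alpha ^+ w) *: v.
  by rewrite /Yl hYn iterX scalerBl scale1r.
have XYl l : X (Yl l) = alpha *: Yl l.
  elim: l => [|l IH]; first exact: hXv.
  by rewrite /Yl iterS hXY -/(Yl l) IH linZ.
have XiYl l : Xi (Yl l) = alpha^-1 *: Yl l.
  have -> : Yl l = X (alpha^-1 *: Yl l) by rewrite linZ XYl scalerA mulVf // scale1r.
  by rewrite hXiX linZ XYl scalerA mulVf // scale1r.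
have GYl l : G (Yl l) = (beta / gam ^+ l) *: Yl l.
  elim: l => [|l IH]; first by rewrite expr0 invr1 mulr1.
  have hG u : G (Y u) = gam^-1 *: Y (G u) by rewrite hYG scalerA mulVf // scale1r.
  rewrite /Yl iterS hG -/(Yl l) IH linZ scalerA; congr (_ *: _).
  by rewrite exprS invfM mulrCA.
pose S := mkseq Yl n.
pose U := <<S>>%VS.
have SU l : (l < n)%N -> Yl l \in U.
  by move=> ln; apply: memv_span; apply/mapP; exists l; rewrite ?mem_iota.
have vU : v \in U := SU 0%N n_gt0.
have closeU (f : V -> V) : islin f -> (forall l, (l < n)%N -> f (Yl l) \in U) ->
    forall u, u \in U -> f u \in U.
  move=> hf hl; apply: span_closed => // i; rewrite size_mkseq => iz.
  rewrite nth_mkseq //; exact: hl.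
have YU : forall u, u \in U -> Y u \in U.
  apply: (closeU); first exact: islin_lin.
  move=> l ln; change (Yl l.+1 \in U).
  case: (ltnP l.+1 n) => h; first exact: SU.
  rewrite (_ : l.+1 = n); last by lia.
  by rewrite Yn; apply: memvZ.
have XU : forall u, u \in U -> X u \in U.
  apply: (closeU); first exact: islin_lin.
  by move=> l ln; rewrite XYl; apply: memvZ; apply: SU.
have XiU : forall u, u \in U -> Xi u \in U.
  apply: (closeU); first exact: islin_lin.
  by move=> l ln; rewrite XiYl; apply: memvZ; apply: SU.
have GU : forall u, u \in U -> G u \in U.
  apply: (closeU); first exact: islin_lin.
  by move=> l ln; rewrite GYl; apply: memvZ; apply: SU.
have iterU (f : V -> V) (hf : forall u, u \in U -> f u \in U) m u :
    u \in U -> iter m f u \in U.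
  by move=> uU; elim: m => [|m IH] //=; apply: hf.
have HU : forall b u, u \in U -> rhoB X Xi G Y b u \in U.
  move=> [[k' j'] i'] u uU.
  have hin : iter j' G (iter i' Y u) \in U by apply: (iterU) => //; apply: (iterU).
  by case: k' => m; apply: (iterU).
have tcU : forall l b, tc n w gam (delta (Yl l)) b \in U.
  elim => [|l IH] b.
    by rewrite /Yl /= hdv; case: ifP => _; [exact: vU | exact: mem0v].
  have -> : Yl l.+1 = rhoH X Xi G Y [:: (1, (0%:Z, 0%N, 1%N))] (Yl l).
    by rewrite /rhoH big_seq1 scale1r.
  by rewrite hYD; apply: key.
have coU : forall u b, u \in U -> tc n w gam (delta u) b \in U.
  move=> u b uU; apply: (closeU (fun u => tc n w gam (delta u) b)) => //.
have Ufull : U = fullv.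
  case: (simple U HU coU) => // U0.
  by move: vU; rewrite U0 memv0 (negPf v0).
have le1 : (p.+1 <= n)%N.
  by rewrite -dimV -Ufull; have := dim_span S; rewrite size_mkseq.
have indep L : (L <= n)%N -> (forall l, (l < L)%N -> Yl l != 0) -> (L <= p.+1)%N.
  move=> Ln hne.
  pose s := [seq (beta / gam ^+ l, Yl l) | l <- iota 0 L].
  have fr : free (map snd s).
    apply: (eig_free (f := G)).
      rewrite -map_comp map_inj_in_uniq ?iota_uniq // => l1 l2.
      rewrite !mem_iota !add0n => /andP [_ h1] /andP [_ h2] /= e.
      have e' : gam ^+ l1 = gam ^+ l2 by apply: invr_inj; apply: (mulfI b0).
      move: e' => /eqP; rewrite (eq_prim_root_expr gam_prim) !modn_small; last by lia.
        by move/eqP.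
      by lia.
    move=> x /mapP [l lI ->] /=; split; first exact: GYl.
    by apply: hne; move: lI; rewrite mem_iota.
  have : \dim <<map snd s>> = L.
    by move: fr; rewrite /free => /eqP ->; rewrite !size_map size_iota.
  move=> <-; rewrite -dimV; apply: dimvS; apply: subvf.
case: (eqVneq (alpha ^+ w) 1) => haw.
  have Yn0 : Yl n = 0 by rewrite Yn haw subrr scale0r.
  have exP : exists l, Yl l == 0 by exists n; apply/eqP.
  case: (ex_minnP exP) => m hm hmin.
  have mp : (m <= p.+1)%N.
    apply: (indep); first by apply: hmin; apply/eqP.
    by move=> l lm; apply/negP => h; have := hmin l h; lia.
  have Yp : iter p.+1 Y v = 0.
    by rewrite -(subnK mp) iterD -/(Yl m) (eqP hm) iter0.
  have bn : beta ^+ n = 1 by rewrite -awbn.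
  split => //.
  by rewrite Yp bn !eqxx; split => [//|[_ //]].
have Yn0 : Yl n != 0.
  by rewrite Yn scaler_eq0 (negPf v0) orbF subr_eq0 eq_sym.
have hne : forall l, (l < n)%N -> Yl l != 0.
  move=> l ln; apply/negP => /eqP h; move/negP: Yn0; apply.
  by rewrite -(subnK (ltnW ln)) /Yl iterD -/(Yl l) h iter0.
have pn : p.+1 = n.
  by apply/eqP; rewrite eqn_leq le1 /=; apply: (indep).
have Yp : iter p.+1 Y v != 0 by rewrite pn.
split => //.
- by rewrite pn ltnn.
- by split => [h|[h _]]; [move/eqP: Yp; rewrite h | move/eqP: haw].
- by split => // _; split => //; rewrite -awbn.
Qed.
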